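(* Let $F$ be a comparison graph on an array $A$ whose underlying undirected graph is a forest with $k$ components, each of which contains a directed Hamiltonian path. Let $H$ be the graph obtained by applying the merge step to $F$ with the list of roots of its components (in some order). If $k>1$, then $H$ has fewer than $k$ components; in fact, for any $k\ge1$, $H$ has exactly $\lceil k/2\rceil$ components.
   Context: An array is a finite sequence $A=(A[1],\dots,A[n])$ of pairwise distinct real numbers. A comparison graph on $A$ is a directed graph on $\{1,\dots,n\}$ all of whose arcs $(u,v)$ satisfy $A[u]<A[v]$. Components are connected components of the underlying undirected graph; a directed Hamiltonian path of a component is a directed path visiting each of its vertices exactly once; the root of a component is its minimum-valued vertex. Component merge of two distinct components $C,D$: set $p,q$ to the roots of $C,D$; while both are defined: if $A[p]<A[q]$ add the arc $(p,q)$ and replace $p$ by the smallest-valued out-neighbour of $p$ within $C$ (ignoring arcs added during this merge; undefined if none); otherwise add $(q,p)$ and replace $q$ analogously within $D$. Merge step with a root list $(\rho_1,\dots,\rho_k)$: component-merge the components of $\rho_{2j-1}$ and $\rho_{2j}$ for $j=1,\dots,\lfloor k/2\rfloor$. *)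

(* Defs.v *)
From HB Require Import structures.
From mathcomp Require Import all_boot all_order all_algebra.
Set Implicit Arguments. Unset Strict Implicit. Unset Printing Implicit Defensive.
Import Order.TTheory GRing.Theory Num.Theory.
Local Open Scope ring_scope.

(* Vertices are 'I_n (i.e. {0,...,n-1} instead of {1,...,n});
   a directed graph is its set of arcs. *)
Section Graphs.
Variables (R : realFieldType) (n : nat) (A : 'I_n -> R).
Notation V := 'I_n.
Notation graph := {set V * V}.

Definition comparison_graph (E : graph) : Prop :=
  forall u v, (u, v) \in E -> A u < A v.

Definition urel (E : graph) : rel V := fun u v => ((u, v) \in E) || ((v, u) \in E).

Definition comp (E : graph) (x : V) : {set V} := [set v | connect (urel E) x v].

Definition ncomp (E : graph) : nat := #|[set comp E x | x : V]|.

(* underlying undirected graph is a forest: no cycle on >= 3 distinct vertices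
   (there are no loops nor antiparallel arcs in a comparison graph) *)
Definition forest (E : graph) : Prop :=
  forall s : seq V, uniq s -> (3 <= size s)%N -> ~~ cycle (urel E) s.

Definition has_ham_path (E : graph) (x : V) : Prop :=
  exists s : seq V, [/\ uniq s, sorted (fun u v => (u, v) \in E) s &
                         forall v, (v \in s) = connect (urel E) x v].

Definition is_root (E : graph) (v : V) : Prop :=
  forall w, connect (urel E) v w -> A v <= A w.

Definition minpick (P : pred V) : option V :=
  [pick w | P w && [forall w', P w' ==> (A w <= A w')]].

Definition next_in (G0 : graph) (C : {set V}) (p : V) : option V :=
  minpick [pred w | ((p, w) \in G0) && (w \in C)].

(* the while-loop of component merge, with a fuel bound (the loop performs
   fewer than #|V| iterations, since each iteration moves p or q strictly
   upwards inside C or D) *)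
Fixpoint merge_loop (G0 : graph) (C D : {set V}) (fuel : nat)
    (p q : option V) (acc : graph) : graph :=
  match fuel with
  | 0 => acc
  | fuel'.+1 =>
    match p, q with
    | Some p', Some q' =>
      if A p' < A q' then
        merge_loop G0 C D fuel' (next_in G0 C p') q (acc :|: [set (p', q')])
      else
        merge_loop G0 C D fuel' p (next_in G0 D q') (acc :|: [set (q', p')])
    | _, _ => acc
    end
  end.

Definition component_merge (G : graph) (x y : V) : graph :=
  let C := comp G x in let D := comp G y in
  merge_loop G C D #|V| (minpick (mem C)) (minpick (mem D)) G.

Fixpoint merge_step (G : graph) (rs : seq V) : graph :=
  match rs with
  | x :: y :: rs' => merge_step (component_merge G x y) rs'
  | _ => G
  end.

End Graphs.

(* Main.v *)
Require Import Defs.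
From HB Require Import structures.
From mathcomp Require Import all_boot all_order all_algebra zify.
Import Order.TTheory GRing.Theory Num.Theory.
Set Implicit Arguments. Unset Strict Implicit.


Section Help.
Local Open Scope ring_scope.
Variables (R : realFieldType) (n : nat) (A : 'I_n -> R).
Notation V := 'I_n.
Notation graph := {set V * V}.

Lemma urel_sym (E : graph) : symmetric (urel E).
Proof. by move=> u v; rewrite /urel orbC. Qed.

Lemma csym (E : graph) : connect_sym (urel E).
Proof. exact/sym_connect_sym/urel_sym. Qed.

Lemma in_comp (E : graph) x v : (v \in Defs.comp E x) = connect (urel E) x v.
Proof. by rewrite inE. Qed.

Lemma comp_eq (E : graph) x y : (Defs.comp E x == Defs.comp E y) = connect (urel E) x y.
Proof.
apply/eqP/idP => [H|H].
  by rewrite -in_comp H in_comp connect0.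
apply/setP => v; rewrite !in_comp; apply/idP/idP => H2.
  by apply: connect_trans H2; rewrite csym.
exact: connect_trans H2.
Qed.

Lemma exmin (P : pred V) w0 : P w0 ->
  exists w, P w && [forall w', P w' ==> (A w <= A w')].
Proof.
move=> Pw0; case: (arg_minP A Pw0) => w Pw Hmin.
exists w; rewrite Pw; apply/forallP => w'; apply/implyP; exact: Hmin.
Qed.

Lemma minpick_in (P : pred V) w : minpick A P = Some w -> P w.
Proof. by rewrite /minpick; case: pickP => // w' /andP[Pw _] [<-]. Qed.

Lemma minpick_ex (P : pred V) w0 : P w0 -> exists w, minpick A P = Some w.
Proof.
move=> /exmin [w Hw]; rewrite /minpick; case: pickP => [w' _|H].
  by exists w'.
by have := H w; rewrite Hw.
Qed.

End Help.

Section Merge.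
Variables (n : nat).
Notation V := 'I_n.
Notation graph := {set V * V}.
Variables (G G' : graph) (x y : V).
Let C := Defs.comp G x.
Let D := Defs.comp G y.
Let CD := C :|: D.
Hypothesis sub : G \subset G'.
Hypothesis hX : forall e, e \in G' -> e \in G \/ (e.1 \in CD /\ e.2 \in CD).
Hypothesis link : connect (urel G') x y.
Hypothesis CneD : C != D.

Lemma CD_closed u v : connect (urel G) u v -> u \in CD -> v \in CD.
Proof.
move=> Huv; rewrite !inE => /orP[] H.
  by rewrite (connect_trans H Huv).
by rewrite (connect_trans H Huv) orbT.
Qed.

Lemma subG'u : subrel (urel G) (connect (urel G')).
Proof.
move=> u v; rewrite /urel => /orP[] H; apply: connect1; rewrite /urel.
  by rewrite (subsetP sub _ H).
by rewrite (subsetP sub _ H) orbT.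
Qed.

Lemma conn_merge u v :
  connect (urel G') u v = connect (urel G) u v || (u \in CD) && (v \in CD).
Proof.
apply/idP/idP.
  move/connectP => [p Hp ->] {v}.
  elim: p u Hp => [|w p IH] u /=; first by rewrite connect0.
  move=> /andP[Huw /IH].
  have Quw : connect (urel G) u w || (u \in CD) && (w \in CD).
    move: Huw; rewrite /urel => /orP[] H; case: (hX H) => [H1|[H1 H2]] /=.
    - by rewrite connect1 // /urel H1.
    - by rewrite H1 H2 orbT.
    - by rewrite connect1 // /urel H1 orbT.
    - by rewrite H1 H2 orbT.
  set z := last w p.
  case/orP: Quw => [cuw|/andP[uCD wCD]] /orP[cwz|/andP[wCD2 zCD]].
  - by rewrite (connect_trans cuw cwz).
  - by rewrite zCD andbT (CD_closed _ wCD2) ?orbT // csym.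
  - by rewrite uCD (CD_closed cwz wCD) orbT.
  - by rewrite uCD zCD orbT.
case/orP => [|/andP[uCD vCD]].
  move=> H; exact (connect_sub subG'u H).
have xC : forall w, w \in CD -> connect (urel G') x w.
  move=> w; rewrite !inE => /orP[] H.
    exact (connect_sub subG'u H).
  move: (connect_sub subG'u H); exact: connect_trans link.
apply: connect_trans (xC _ vCD); rewrite csym; exact: xC.
Qed.

Lemma comp_merge v :
  Defs.comp G' v = if v \in CD then CD else Defs.comp G v.
Proof.
apply/setP => w; rewrite in_comp conn_merge.
case: ifP => vCD; rewrite ?in_comp ?andbF ?orbF //=.
apply/idP/idP => [/orP[]//|->]; last by rewrite orbT.
by move=> H; apply: CD_closed H vCD.
Qed.

Lemma in_CD_comp v : v \in CD -> Defs.comp G v = C \/ Defs.comp G v = D.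
Proof.
rewrite inE => /orP[] H; [left|right]; apply/eqP; rewrite eq_sym comp_eq;
  by rewrite -in_comp.
Qed.

Lemma notin_CD_comp v : v \notin CD -> (Defs.comp G v != C) && (Defs.comp G v != D).
Proof.
move=> H; apply/andP; split; apply/negP => /eqP E; move: H;
  by rewrite /CD in_setU -E in_comp connect0 ?orbT.
Qed.

Lemma ncomp_merge : (ncomp G').+1 = ncomp G.
Proof.
set S := [set Defs.comp G v | v : V]. rewrite /ncomp -/S.
have -> : [set Defs.comp G' v | v : V] = CD |: (S :\ C :\ D).
  apply/setP => X; rewrite !inE; apply/imsetP/idP.
    move=> [v _ ->]; rewrite comp_merge; case: ifP => vCD; first by rewrite eqxx.
    have /andP[h1 h2] := notin_CD_comp (negbT vCD).
    by rewrite h1 h2 imset_f ?orbT.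
  case/orP => [/eqP ->|/and3P[XD XC /imsetP[v _ EX]]].
    by exists x => //; rewrite comp_merge /CD in_setU in_comp connect0.
  exists v => //; rewrite comp_merge; case: ifP => // vCD.
  by case: (in_CD_comp vCD) => E; move: XC XD; rewrite EX E eqxx.
rewrite cardsU1.
have CS : C \in S by rewrite imset_f.
have DS : D \in S :\ C by rewrite !inE eq_sym CneD imset_f.
rewrite (cardsD1 C S) CS (cardsD1 D (S :\ C)) DS.
have -> : CD \notin S :\ C :\ D.
  rewrite !inE; apply/negP => /and3P[H1 H2 /imsetP[v _ EX]].
  have vCD : v \in CD by rewrite EX in_comp connect0.
  by case: (in_CD_comp vCD) => E; move: H1 H2; rewrite EX E eqxx.
by [].
Qed.

Lemma comp_merge_out v : v \notin CD -> Defs.comp G' v = Defs.comp G v.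
Proof. by move=> H; rewrite comp_merge (negbTE H). Qed.

End Merge.

Section Loop.
Local Open Scope ring_scope.
Variables (R : realFieldType) (n : nat) (A : 'I_n -> R).
Notation V := 'I_n.
Notation graph := {set V * V}.

Lemma loop_sub (G0 : graph) (C D : {set V}) fuel (p q : option V) (acc : graph) :
  acc \subset merge_loop A G0 C D fuel p q acc.
Proof.
elim: fuel p q acc => [|f IH] [p|] [q|] acc //=.
case: ifP => _; apply: subset_trans (IH _ _ _); exact: subsetUl.
Qed.

Lemma loop_in (G0 : graph) (C D : {set V}) fuel (p q : option V) (acc : graph) :
  (forall p', p = Some p' -> p' \in C) -> (forall q', q = Some q' -> q' \in D) ->
  forall e, e \in merge_loop A G0 C D fuel p q acc ->
  e \in acc \/ (e.1 \in C :|: D /\ e.2 \in C :|: D).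
Proof.
elim: fuel p q acc => [|f IH] [p|] [q|] acc //= hp hq e; try by left.
have pC := hp _ erefl; have qD := hq _ erefl.
case: ifP => _ /IH [].
- by move=> p' /minpick_in /andP[].
- by [].
- rewrite in_setU => /orP[]; first by left.
  by rewrite inE => /eqP -> /=; right; rewrite !in_setU pC qD orbT.
- by right.
- by [].
- by move=> q' /minpick_in /andP[].
- rewrite in_setU => /orP[]; first by left.
  by rewrite inE => /eqP -> /=; right; rewrite !in_setU pC qD orbT.
- by right.
Qed.

Lemma link_help (G G' : graph) x y p0 q0 :
  connect (urel G) x p0 -> connect (urel G) q0 y ->
  G \subset G' -> urel G' p0 q0 -> connect (urel G') x y.
Proof.
move=> h1 h2 sub h.
have sr : subrel (urel G) (connect (urel G')).
  move=> u v; rewrite /urel => /orP[] H; apply: connect1; rewrite /urel.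
    by rewrite (subsetP sub _ H).
  by rewrite (subsetP sub _ H) orbT.
apply: connect_trans (connect_sub sr h1) _.
apply: connect_trans (connect_sub sr h2).
exact: connect1.
Qed.

Lemma cm_props (G : graph) x y :
  let G' := component_merge A G x y in
  [/\ G \subset G',
      forall e, e \in G' -> e \in G \/
        (e.1 \in Defs.comp G x :|: Defs.comp G y /\ e.2 \in Defs.comp G x :|: Defs.comp G y)
    & connect (urel G') x y].
Proof.
rewrite /component_merge /=.
set C := Defs.comp G x; set D := Defs.comp G y.
have [p0 Hp] : exists p0, minpick A (mem C) = Some p0.
  by apply: (@minpick_ex _ _ A _ x); rewrite /= in_comp connect0.
have [q0 Hq] : exists q0, minpick A (mem D) = Some q0.
  by apply: (@minpick_ex _ _ A _ y); rewrite /= in_comp connect0.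
have pC : p0 \in C by have := minpick_in Hp.
have qD : q0 \in D by have := minpick_in Hq.
split.
- exact: loop_sub.
- apply: loop_in => [p'|q']; [rewrite Hp => -[<-] | rewrite Hq => -[<-]]; done.
rewrite Hp Hq.
case E: #|V| => [|f]; first by have := ltn_ord x; rewrite -[X in (_ < X)%N](card_ord n) E.
have pcon : connect (urel G) x p0 by rewrite -in_comp.
have qcon : connect (urel G) q0 y by rewrite csym -in_comp.
rewrite /=; case: ifP => _.
  apply: (link_help pcon qcon).
    by apply: subset_trans (loop_sub _ _ _ _ _ _ _); exact: subsetUl.
  apply/orP; left; apply: (subsetP (loop_sub _ _ _ _ _ _ _)).
  by rewrite in_setU set11 orbT.
apply: (link_help pcon qcon).
  by apply: subset_trans (loop_sub _ _ _ _ _ _ _); exact: subsetUl.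
apply/orP; right; apply: (subsetP (loop_sub _ _ _ _ _ _ _)).
by rewrite in_setU set11 orbT.
Qed.

End Loop.

Section Step.
Local Open Scope ring_scope.
Variables (R : realFieldType) (n : nat) (A : 'I_n -> R).
Notation V := 'I_n.
Notation graph := {set V * V}.

Lemma step_count m : forall (rs : seq V) (G : graph), (size rs <= m)%N ->
  uniq (map (Defs.comp G) rs) ->
  (ncomp (merge_step A G rs) + (size rs)./2)%N = ncomp G.
Proof.
elim: m => [|m IH] [|x [|y rs]] G hs //=; try by rewrite addn0.
move=> /andP[hx /andP[hy hu]].
have [sub hX link] := cm_props A G x y.
have CneD : Defs.comp G x != Defs.comp G y.
  by apply: contra hx => /eqP ->; rewrite inE eqxx.
have hn := ncomp_merge sub hX link CneD.
have hmap : map (Defs.comp (component_merge A G x y)) rs = map (Defs.comp G) rs.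
  apply/eq_in_map => r hr; apply: (comp_merge_out sub hX link).
  rewrite in_setU !in_comp; apply/negP => /orP[] H.
    move: hx; rewrite inE negb_or => /andP[_]; apply/negP/negPn.
    by apply/mapP; exists r => //; apply/eqP; rewrite comp_eq.
  move: hy; apply/negP/negPn.
  by apply/mapP; exists r => //; apply/eqP; rewrite comp_eq.
have := IH rs (component_merge A G x y) _.
rewrite hmap => /(_ _ hu) h; last by move: hs; rewrite /=; lia.
Qed.

End Step.

Unset Implicit Arguments.
Local Open Scope ring_scope.

Theorem lemma3 (R : realFieldType) (n : nat) (A : 'I_n -> R)
    (F : {set 'I_n * 'I_n}) (rs : seq 'I_n) :
  injective A ->
  comparison_graph A F ->
  forest F ->
  (forall x, has_ham_path F x) ->
  uniq rs ->
  (forall v, v \in rs <-> is_root A F v) ->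
  let k := ncomp F in
  let H := merge_step A F rs in
  ((1 < k)%N -> (ncomp H < k)%N) /\ ncomp H = uphalf k.
Proof.
move=> inj _ _ _ urs hroot k H.
have uq : uniq (map (Defs.comp F) rs).
  rewrite map_inj_in_uniq // => r1 r2 h1 h2 /eqP; rewrite comp_eq => c12.
  have c21 : connect (urel F) r2 r1 by rewrite csym.
  have /hroot R1 := h1; have /hroot R2 := h2.
  apply: inj; apply/eqP; rewrite eq_le (R1 _ c12) (R2 _ c21) //.
have hk : k = size rs.
  rewrite /k /ncomp -(size_map (Defs.comp F) rs) -(card_uniqP uq); apply: eq_card => X.
  apply/imsetP/mapP => [[v _ ->]|[r _ ->]]; last by exists r.
  have v0 : (mem (Defs.comp F v)) v by rewrite /= in_comp connect0.
  have [r /andP[rv /forallP hmin]] := exmin A v0.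
  have rroot : is_root A F r.
    move=> w crw; have := hmin w; rewrite /= !in_comp => /implyP; apply.
    by apply: connect_trans crw; rewrite -in_comp.
  exists r; first by apply/hroot.
  by apply/eqP; rewrite comp_eq -in_comp.
have := step_count A (leqnn (size rs)) uq.
rewrite -/H -/k -hk => h.
have := odd_double_half k; have := leq_b1 (odd k); rewrite uphalf_half.
split; [move=> hk1|]; lia.
Qed.
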